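(* In the standing setting below, let $x'\in\mathbb{X}$, $y_0,y_1\in\mathbb{Y}$ with $y_0\ne y_1$, and $f_i(x)=-c(x,y_i)+c(x',y_i)$ for $i=0,1$. Let $S=\{x\in\mathbb{X}: f_0(x)\le f_1(x)\}$. If $f_0(x_0)=f_1(x_0)$ for some $x_0\in\mathbb{X}$, then $x_0\in\partial S$ (boundary in $\mathbb{R}^n$).
   Context: Standing setting: $\mathbb{X},\mathbb{Y}\subset\mathbb{R}^n$ are compact with non-empty interior; $c:\mathbb{X}\times\mathbb{Y}\to\mathbb{R}$ has continuous $D_xc$, $D_yc$, and continuous mixed second derivatives with $D^2_{xy}c=(D^2_{yx}c)^T$; for each $x$ the map $y\mapsto -D_xc(x,y)$ is injective on $\mathbb{Y}$ and for each $y$ the map $x\mapsto -D_yc(x,y)$ is injective on $\mathbb{X}$; $D^2_{xy}c(x,y)$ is invertible everywhere; for every $y$ the set $\{-D_yc(x,y):x\in\mathbb{X}\}$ is convex and for every $x$ the set $\{-D_xc(x,y):y\in\mathbb{Y}\}$ is convex. *)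

(* Defs.v *)
From HB Require Import structures.
From mathcomp Require Import all_boot all_order all_algebra.
From mathcomp Require Import all_classical all_reals all_analysis.
Set Implicit Arguments. Unset Strict Implicit. Unset Printing Implicit Defensive.
Import Order.TTheory GRing.Theory Num.Theory.
Import numFieldNormedType.Exports.
Local Open Scope classical_set_scope.
Local Open Scope ring_scope.

Definition dotv {R : realType} {n : nat} (u v : 'rV[R]_n) : R :=
  \sum_(i < n) u ord0 i * v ord0 i.

Definition has_grad {R : realType} {n : nat} (f : 'rV[R]_n -> R^o)
  (x g : 'rV[R]_n) : Prop :=
  differentiable f x /\ forall v, 'd f x v = dotv g v.

(* F : R^n -> R^n is differentiable at x with Jacobian matrix J,
   J i j = d F_i / d x_j, i.e. dF(x) v = J v (in row form: v *m J^T). *)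
Definition has_jac {R : realType} {n : nat} (F : 'rV[R]_n -> 'rV[R]_n)
  (x : 'rV[R]_n) (J : 'M[R]_n) : Prop :=
  differentiable F x /\ forall v, 'd F x v = v *m J^T.

Definition convexv {R : realType} {n : nat} (A : set 'rV[R]_n) : Prop :=
  forall a b t, A a -> A b -> 0 <= t -> t <= 1 -> A ((1 - t) *: a + t *: b).

Definition boundary {R : realType} {n : nat} (A : set 'rV[R]_n) : set 'rV[R]_n :=
  closure A `\` interior A.

(* Dxc x y is the gradient of c(., y) at x, Dyc x y the
   gradient of c(x, .) at y, Dxyc x y the matrix (d^2 c / dx_i dy_j)_{ij},
   Dyxc x y the matrix (d^2 c / dy_j dx_i)_{ji}.  Derivatives are required at
   interior points and the derivative functions are required to be continuous
   on X x Y (continuous extension up to the boundary). *)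
Definition standing_setting {R : realType} {n : nat}
  (X Y : set 'rV[R]_n) (c : 'rV[R]_n -> 'rV[R]_n -> R) : Prop :=
  compact X /\ compact Y /\ (interior X !=set0) /\ (interior Y !=set0) /\
  exists (Dxc Dyc : 'rV[R]_n -> 'rV[R]_n -> 'rV[R]_n)
         (Dxyc Dyxc : 'rV[R]_n -> 'rV[R]_n -> 'M[R]_n),
  ({within X `*` Y, continuous (fun p => c p.1 p.2)} /\
      (forall x y, interior X x -> Y y -> has_grad (fun z => c z y) x (Dxc x y)) /\
      (forall x y, X x -> interior Y y -> has_grad (fun z => c x z) y (Dyc x y)) /\
      {within X `*` Y, continuous (fun p => Dxc p.1 p.2)} /\
      {within X `*` Y, continuous (fun p => Dyc p.1 p.2)} /\
      (forall x y, interior X x -> interior Y y ->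
         has_jac (fun z => Dxc x z) y (Dxyc x y) /\
         has_jac (fun z => Dyc z y) x (Dyxc x y)) /\
      {within X `*` Y, continuous (fun p => Dxyc p.1 p.2)} /\
      {within X `*` Y, continuous (fun p => Dyxc p.1 p.2)} /\
      (forall x y, X x -> Y y -> Dxyc x y = (Dyxc x y)^T) /\
      (forall x, X x -> {in Y &, injective (fun y => - Dxc x y)}) /\
      (forall y, Y y -> {in X &, injective (fun x => - Dyc x y)}) /\
      (forall x y, X x -> Y y -> Dxyc x y \in unitmx) /\
      (forall y, Y y -> convexv [set - Dyc x y | x in X]) /\
      (forall x, X x -> convexv [set - Dxc x y | y in Y])).

(* Main.v *)
Require Import Defs.
From HB Require Import structures.
From mathcomp Require Import all_boot all_order all_algebra.
From mathcomp Require Import all_classical all_reals all_analysis.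
From mathcomp Require Import lra.
Import Order.TTheory GRing.Theory Num.Theory.
Import numFieldNormedType.Exports.
Local Open Scope classical_set_scope.
Local Open Scope ring_scope.

Theorem lemma2p19 (R : realType) (n : nat) (X Y : set 'rV[R]_n)
  (c : 'rV[R]_n -> 'rV[R]_n -> R) (x' y0 y1 x0 : 'rV[R]_n) :
  standing_setting X Y c ->
  X x' -> Y y0 -> Y y1 -> y0 <> y1 ->
  let f0 := fun x => - c x y0 + c x' y0 in
  let f1 := fun x => - c x y1 + c x' y1 in
  let S := [set x | X x /\ f0 x <= f1 x] in
  X x0 -> f0 x0 = f1 x0 ->
  boundary S x0.
Proof.
move=> [_ [_ [_ [_ [Dxc [Dyc [Dxyc [Dyxc [_ [gradx [_ [_ [_ [_ [_ [_ [_ [injx _]]]]]]]]]]]]]]]]]].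
move=> Xx' Yy0 Yy1 y01 f0 f1 S Xx0 fx0.
split; first by apply: subset_closure; split => //; rewrite fx0.
move=> iS.
have iXx0 : interior X x0 by apply: filterS iS => x [].
pose g1 := (fun z => c z y1 : R^o).
pose g0 := (fun z => c z y0 : R^o).
pose g := g1 - g0.
have [dg1 eg1] := gradx x0 y1 iXx0 Yy1.
have [dg0 eg0] := gradx x0 y0 iXx0 Yy0.
pose d := Dxc x0 y1 - Dxc x0 y0.
have dgd : derivable g x0 d by apply: derivableB; apply: diff_derivable.
have Dg : 'D_d g x0 = dotv d d.
  rewrite deriveB; try exact: diff_derivable.
  rewrite !deriveE // eg1 eg0 /dotv -sumrB; apply: eq_bigr => i _.
  by rewrite !mxE mulrBl.
have dne : d != 0.
  apply/negP => /eqP d0; apply: y01; apply: (injx x0 Xx0); rewrite ?inE //.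
  by apply/eqP; rewrite /= eqr_opp eq_sym -subr_eq0; apply/eqP.
have dpos : 0 < dotv d d.
  have : ~~ [forall j, d ord0 j == 0].
    apply/negP => /forallP H; move/negP: dne; apply; apply/eqP/rowP => j.
    by rewrite [RHS]mxE; apply/eqP; apply: H.
  rewrite negb_forall => /existsP [j dj].
  rewrite /dotv (bigD1 j) //=.
  apply: (@lt_le_trans _ _ (d ord0 j * d ord0 j)).
    by rewrite -expr2 exprn_even_gt0.
  rewrite lerDl; apply: sumr_ge0 => i _; rewrite -expr2; exact: sqr_ge0.
have L : (fun h : R => h^-1 *: ((g \o shift x0) (h *: d) - g x0)) @ 0^' --> dotv d d.
  by rewrite -Dg; exact: dgd.
have H1 := cvgr_gt (dotv d d) L 0 dpos.
specialize (H1 _).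
have H1' : \forall t \near (0:R), t != 0 ->
    0 < t^-1 *: ((g \o shift x0) (t *: d) - g x0) := H1.
have H2 : \forall t \near (0:R), S (t *: d + x0).
  have C : (fun t : R => t *: d + x0) @ nbhs (0:R) --> x0.
    suff : (fun t : R => t *: d + x0) @ nbhs (0:R) --> 0 *: d + x0.
      by rewrite scale0r add0r.
    apply: cvgD; [apply: cvgZ; [exact: cvg_id | exact: cvg_cst] | exact: cvg_cst].
  exact: C _ iS.
have H3 := filterS2 _ (fun t h1 h2 => conj h1 h2) H1' H2.
specialize (H3 _).
have [e e0 He] := (nbhs_ballP _ _).1 H3.
have [] := He (e / 2).
  rewrite /ball /= sub0r normrN ger0_norm; have e0' : 0 < e := e0; lra.
move=> q0 [_ St]; have e0' : 0 < e := e0.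
have e2 : e / 2 != 0 by apply/eqP; lra.
move: (q0 e2) St; rewrite /g /g1 /g0 /= /f0 /f1.
set z := e / 2 *: d + x0.
move=> q1 St.
have : (e / 2)^-1 * (c z y1 - c z y0 - (c x0 y1 - c x0 y0)) <= 0.
  apply: mulr_ge0_le0; first by rewrite invr_ge0; lra.
  move: fx0; rewrite /f0 /f1; lra.
move: q1; rewrite /GRing.scale /=.
have E : forall w, (g1 - g0) w = c w y1 - c w y0 by [].
rewrite !E; lra.
Qed.
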